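(* Let $M\in\mathbb N$ and let real numbers $Q_k,\hat Q_k$, $0\le k\le M$, be given. Let $\theta_n,\tilde\theta_n$ ($0\le n\le M$) be the unique reals such that $$\sum_{k\le M}Q_k\binom{h_k}{0}+\hat Q_k\binom{0}{\hat h_k}=\sum_{n\le M}\theta_n\binom{f_n}{g_n}+\tilde\theta_n\binom{\tilde f_n}{\tilde g_n}.$$ Then there are real coefficients $A_{n+2j,n},B_{n+2j,n},\tilde A_{n+2j,n},\tilde B_{n+2j,n}$ depending only on $p,q,\mu$ such that $$\theta_n=\sum_{j=0}^{[\frac{M-n}2]}A_{n+2j,n}Q_{n+2j}+B_{n+2j,n}\hat Q_{n+2j},\qquad \tilde\theta_n=\sum_{j=0}^{[\frac{M-n}2]}\tilde A_{n+2j,n}Q_{n+2j}+\tilde B_{n+2j,n}\hat Q_{n+2j},$$ and in particular $$A_{n,n}=\frac{q}{\Gamma(2pq+p+q)},\quad B_{n,n}=\frac{p}{\gamma(2pq+p+q)},\quad A_{n+2,n}=-\frac{\tilde e_{n+2,n}}{\Gamma\gamma(2pq+p+q)},\quad B_{n+2,n}=\frac{p+1}{q+1}\,\frac{\tilde e_{n+2,n}}{\gamma^2(2pq+p+q)},$$ where $\tilde e_{n+2,n}=(n+2)(n+1)\frac{pq\gamma(q+1)(1-\mu)}{3pq+p+q-1}$.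
   Context: One space dimension; $p,q>1$, $\mu>0$; $\Gamma,\gamma>0$ with $\gamma^p=\Gamma\frac{p+1}{pq-1}$, $\Gamma^q=\gamma\frac{q+1}{pq-1}$. $h_n(y)=\sum_{j\le n/2}\frac{n!}{(n-2j)!j!}(-1)^jy^{n-2j}$ and $\hat h_n(y)=\sum_{j\le n/2}\frac{n!}{(n-2j)!j!}(-1)^j\mu^jy^{n-2j}$. The pairs $(f_n,g_n)$ and $(\tilde f_n,\tilde g_n)$ are the polynomial eigenvectors of degree $n$ of $\mathscr H+\mathcal M$ (with $\mathscr H=\mathrm{diag}(\frac{d^2}{dy^2}-\frac y2\frac d{dy},\ \mu\frac{d^2}{dy^2}-\frac y2\frac d{dy})$ and $\mathcal M=\begin{pmatrix}-\frac{p+1}{pq-1}&p\gamma^{p-1}\\ q\Gamma^{q-1}&-\frac{q+1}{pq-1}\end{pmatrix}$) with eigenvalues $1-\frac n2$ and $-(\frac n2+\frac{(p+1)(q+1)}{pq-1})$ respectively, normalized so that the leading coefficients are $((p+1)\Gamma,(q+1)\gamma)$ and $(p\Gamma,-q\gamma)$ respectively; each is a combination of $\binom{h_{n-2j}}{0},\binom{0}{\hat h_{n-2j}}$, $0\le j\le n/2$. *)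

(* Defs.v *)
From Stdlib Require Import Reals Arith Factorial.
Open Scope R_scope.

Definition h (n : nat) (y : R) : R :=
  sum_f_R0 (fun j => INR (fact n) / (INR (fact (n - 2 * j)) * INR (fact j))
                      * (-1) ^ j * y ^ (n - 2 * j)) (n / 2).

Definition hh (mu : R) (n : nat) (y : R) : R :=
  sum_f_R0 (fun j => INR (fact n) / (INR (fact (n - 2 * j)) * INR (fact j))
                      * (-1) ^ j * mu ^ j * y ^ (n - 2 * j)) (n / 2).

Definition is_deriv (f f' : R -> R) : Prop :=
  forall y, derivable_pt_lim f y (f' y).

(* (f,g) is an eigenvector of H + M with eigenvalue lam, where
   H = diag(d^2/dy^2 - y/2 d/dy, mu d^2/dy^2 - y/2 d/dy) and
   M = [[-(p+1)/(pq-1), p gam^(p-1)], [q Gam^(q-1), -(q+1)/(pq-1)]] *)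
Definition eigenpair (p q mu Gam gam lam : R) (f g : R -> R) : Prop :=
  exists f1 f2 g1 g2 : R -> R,
    is_deriv f f1 /\ is_deriv f1 f2 /\ is_deriv g g1 /\ is_deriv g1 g2 /\
    forall y,
      f2 y - y / 2 * f1 y + (- ((p + 1) / (p * q - 1))) * f y
        + p * Rpower gam (p - 1) * g y = lam * f y /\
      mu * g2 y - y / 2 * g1 y + q * Rpower Gam (q - 1) * f y
        + (- ((q + 1) / (p * q - 1))) * g y = lam * g y.

Definition poly_deg_lead (f : R -> R) (n : nat) (a : R) : Prop :=
  exists c : nat -> R, c n = a /\
    forall y, f y = sum_f_R0 (fun k => c k * y ^ k) n.

Definition hcomb (mu : R) (n : nat) (f g : R -> R) : Prop :=
  exists a b : nat -> R, forall y,
    f y = sum_f_R0 (fun j => a j * h (n - 2 * j) y) (n / 2) /\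
    g y = sum_f_R0 (fun j => b j * hh mu (n - 2 * j) y) (n / 2).

Definition etilde (p q mu gam : R) (n : nat) : R :=
  (INR n + 2) * (INR n + 1) * (p * q * gam * (q + 1) * (1 - mu))
    / (3 * p * q + p + q - 1).

(* Main.v *)
Require Import Defs.
From Stdlib Require Import Reals Lra Lia FunctionalExtensionality Arith Factorial IndefiniteDescription.
Open Scope R_scope.

Definition poly_at (c : nat -> R) (N : nat) (y : R) : R :=
  sum_f_R0 (fun k => c k * y ^ k) N.
Definition dc (c : nat -> R) (k : nat) : R := INR (S k) * c (S k).

Lemma dpl_val f x l l' : derivable_pt_lim f x l -> l = l' -> derivable_pt_lim f x l'.
Proof. intros H ->; exact H. Qed.

Lemma poly_deriv (c : nat -> R) (N : nat) (y : R) :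
  derivable_pt_lim (fun z => poly_at c (S N) z) y (poly_at (dc c) N y).
Proof.
  induction N as [|N IH].
  - unfold poly_at, dc; simpl.
    change (derivable_pt_lim (plus_fct (fun z => c 0%nat * 1) (mult_real_fct (c 1%nat) (fun z => z ^ 1))) y
      (1 * c 1%nat * 1)).
    eapply dpl_val. apply derivable_pt_lim_plus.
    + apply derivable_pt_lim_const.
    + apply derivable_pt_lim_scal. apply derivable_pt_lim_pow.
    + simpl; ring.
  - unfold poly_at in *. rewrite tech5.
    change (derivable_pt_lim (plus_fct (fun z => sum_f_R0 (fun k => c k * z ^ k) (S N))
       (mult_real_fct (c (S (S N))) (fun z => z ^ (S (S N))))) y
       (sum_f_R0 (fun k => dc c k * y ^ k) N + dc c (S N) * y ^ S N)).
    apply derivable_pt_lim_plus; [exact IH|].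
    eapply dpl_val. apply derivable_pt_lim_scal. apply derivable_pt_lim_pow.
    unfold dc. simpl; ring.
Qed.

Lemma poly_zero (N : nat) : forall c : nat -> R,
  (forall y, poly_at c N y = 0) -> forall k, (k <= N)%nat -> c k = 0.
Proof.
  induction N as [|N IH]; intros c Hc k Hk.
  - assert (k = 0%nat) by lia; subst. specialize (Hc 0). unfold poly_at in Hc; simpl in Hc. lra.
  - destruct k as [|k].
    + specialize (Hc 0). unfold poly_at in Hc. rewrite decomp_sum in Hc by lia.
      rewrite sum_eq_R0 in Hc. simpl in Hc; lra.
      intros i _. simpl. ring.
    + assert (Hd : forall y, poly_at (dc c) N y = 0).
      { intro y. apply (uniqueness_limite (fun z => poly_at c (S N) z) y).
        apply poly_deriv.
        replace (fun z => poly_at c (S N) z) with (fct_cte 0).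
        apply derivable_pt_lim_const.
        apply functional_extensionality. intro z. rewrite Hc. reflexivity. }
      specialize (IH _ Hd k ltac:(lia)). unfold dc in IH.
      apply Rmult_integral in IH. destruct IH as [H|H]; auto.
      exfalso. apply (not_0_INR (S k)); auto.
Qed.

Lemma sum_swap (X : nat -> nat -> R) (I J : nat) :
  sum_f_R0 (fun i => sum_f_R0 (fun j => X i j) J) I =
  sum_f_R0 (fun j => sum_f_R0 (fun i => X i j) I) J.
Proof.
  induction I as [|I IH]; simpl.
  - reflexivity.
  - rewrite IH. rewrite <- sum_plus. apply sum_eq. intros; reflexivity.
Qed.

Lemma sum_delta (M l : nat) (v : R) : (l <= M)%nat ->
  sum_f_R0 (fun k => if Nat.eqb k l then v else 0) M = v.
Proof.
  induction M as [|M IH]; intros Hl.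
  - assert (l = 0%nat) by lia; subst; simpl; reflexivity.
  - rewrite tech5. destruct (Nat.eq_dec l (S M)) as [->|Hne].
    + rewrite Nat.eqb_refl. rewrite sum_eq_R0. ring.
      intros n Hn. destruct (Nat.eqb_spec n (S M)); [lia|reflexivity].
    + rewrite IH by lia. destruct (Nat.eqb_spec (S M) l); [lia|ring].
Qed.

Lemma tri_swap (Y : nat -> nat -> R) (N : nat) :
  sum_f_R0 (fun i => sum_f_R0 (fun l => Y i l) (N - i)) N =
  sum_f_R0 (fun j => sum_f_R0 (fun i => Y i (j - i)%nat) j) N.
Proof.
  induction N as [|N IH].
  - simpl. reflexivity.
  - rewrite tech5. rewrite (tech5 (fun j => _)). rewrite <- IH.
    replace (S N - S N)%nat with 0%nat by lia.
    rewrite (tech5 (fun i => Y i (S N - i)%nat)).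
    replace (S N - S N)%nat with 0%nat by lia.
    assert (E : sum_f_R0 (fun i => sum_f_R0 (fun l => Y i l) (S N - i)) N =
      sum_f_R0 (fun i => sum_f_R0 (fun l => Y i l) (N - i) + Y i (S N - i)%nat) N).
    { apply sum_eq. intros i Hi. replace (S N - i)%nat with (S (N - i)) by lia.
      rewrite tech5. reflexivity. }
    rewrite E, sum_plus. simpl (sum_f_R0 (fun l : nat => Y (S N) l) 0). ring.
Qed.

Lemma even_double (t : nat) : Nat.even (2 * t) = true.
Proof. apply Nat.even_spec. exists t. reflexivity. Qed.
Lemma even_sdouble (t : nat) : Nat.even (S (2 * t)) = false.
Proof. replace (S (2*t)) with (2*t+1)%nat by lia. apply Nat.even_odd. Qed.

Lemma div2_even_S (x : nat) :
  (Nat.even (S x) = true /\ Nat.div2 (S x) = S (Nat.div2 x)) \/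
  (Nat.even (S x) = false /\ Nat.div2 (S x) = Nat.div2 x).
Proof.
  destruct (Nat.Even_or_Odd x) as [[t Ht]|[t Ht]]; subst.
  - right. rewrite even_sdouble, Nat.div2_succ_double, Nat.div2_double. auto.
  - left. replace (S (2 * t + 1)) with (2 * S t)%nat by lia.
    rewrite even_double, Nat.div2_double.
    replace (2 * t + 1)%nat with (S (2 * t)) by lia. rewrite Nat.div2_succ_double. auto.
Qed.

Lemma even_div2 (x : nat) : Nat.even x = true -> (2 * Nat.div2 x)%nat = x.
Proof.
  destruct (Nat.Even_or_Odd x) as [[t Ht]|[t Ht]]; subst; intro H.
  - rewrite Nat.div2_double. reflexivity.
  - replace (2 * t + 1)%nat with (S (2 * t)) in H by lia. rewrite even_sdouble in H. discriminate.
Qed.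

Definition sp_term (W : nat -> R) (m k : nat) : R :=
  if Nat.even (m - k) then W (Nat.div2 (m - k)) else 0.

Lemma sparse_step (m : nat) (W : nat -> R) :
  sum_f_R0 (sp_term W (S (S m))) (S (S m)) =
  W 0%nat + sum_f_R0 (sp_term (fun j => W (S j)) m) m.
Proof.
  rewrite tech5, tech5. unfold sp_term at 2 3.
  replace (S (S m) - S (S m))%nat with 0%nat by lia.
  replace (S (S m) - S m)%nat with 1%nat by lia. simpl Nat.even. simpl Nat.div2.
  rewrite (sum_eq _ (sp_term (fun j => W (S j)) m)). ring.
  intros k Hk. unfold sp_term. replace (S (S m) - k)%nat with (S (S (m - k))) by lia.
  reflexivity.
Qed.

Lemma sparse (m0 : nat) : forall W : nat -> R,
  sum_f_R0 W (Nat.div2 m0) = sum_f_R0 (sp_term W m0) m0.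
Proof.
  assert (H : forall m, (forall W : nat -> R, sum_f_R0 W (Nat.div2 m) = sum_f_R0 (sp_term W m) m) /\
                        (forall W : nat -> R, sum_f_R0 W (Nat.div2 (S m)) = sum_f_R0 (sp_term W (S m)) (S m))).
  { induction m as [|m IH].
    - split; intro W; unfold sp_term; simpl; ring.
    - destruct IH as [IH1 IH2]. split; [exact IH2|].
      intro W. rewrite sparse_step. change (Nat.div2 (S (S m))) with (S (Nat.div2 m)).
      rewrite (decomp_sum W) by apply Nat.lt_0_succ. simpl pred. rewrite IH1. reflexivity. }
  apply H.
Qed.

Lemma div2_step_sum (x : nat) (Y : nat -> R) :
  sum_f_R0 Y (Nat.div2 (S x)) =
  sum_f_R0 Y (Nat.div2 x) + (if Nat.even (S x) then Y (Nat.div2 (S x)) else 0).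
Proof.
  destruct (div2_even_S x) as [[H1 H2]|[H1 H2]]; rewrite H1, H2.
  - rewrite tech5. reflexivity.
  - ring.
Qed.

Lemma regroup (M : nat) (Z : nat -> nat -> R) :
  sum_f_R0 (fun n => sum_f_R0 (fun j => Z n j) (Nat.div2 n)) M =
  sum_f_R0 (fun k => sum_f_R0 (fun i => Z (k + 2 * i)%nat i) (Nat.div2 (M - k))) M.
Proof.
  induction M as [|M IH].
  - simpl. reflexivity.
  - rewrite tech5, IH. rewrite (tech5 (fun k => _)).
    replace (S M - S M)%nat with 0%nat by lia.
    rewrite (sum_eq (fun k => sum_f_R0 (fun i => Z (k + 2 * i)%nat i) (Nat.div2 (S M - k)))
      (fun k => sum_f_R0 (fun i => Z (k + 2 * i)%nat i) (Nat.div2 (M - k)) +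
                sp_term (Z (S M)) (S M) k)).
    + rewrite sum_plus. rewrite (sparse (S M) (fun j => Z (S M) j)). rewrite (tech5 (sp_term _ _)).
      unfold sp_term at 2. replace (S M - S M)%nat with 0%nat by lia. simpl (Nat.div2 0). simpl (Nat.even 0).
      simpl (sum_f_R0 _ 0). rewrite Nat.add_0_r. change (fun j => Z (S M) j) with (Z (S M)). cbv iota. ring.
    + intros k Hk. replace (S M - k)%nat with (S (M - k)) by lia.
      rewrite div2_step_sum. unfold sp_term. replace (S M - k)%nat with (S (M - k)) by lia.
      destruct (Nat.even (S (M - k))) eqn:E; [|reflexivity].
      f_equal. f_equal. pose proof (even_div2 _ E). lia.
Qed.

Lemma sum_mult_r (A : nat -> R) (N : nat) (x : R) :
  sum_f_R0 (fun i => A i * x) N = sum_f_R0 A N * x.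
Proof. rewrite <- scal_sum. ring. Qed.

Lemma sum_mult_l (A : nat -> R) (N : nat) (x : R) :
  sum_f_R0 (fun i => x * A i) N = x * sum_f_R0 A N.
Proof. rewrite scal_sum. apply sum_eq. intros; ring. Qed.

Lemma poly_lin (w : nat -> R) (cs : nat -> nat -> R) (J N : nat) (y : R) :
  sum_f_R0 (fun j => w j * poly_at (cs j) N y) J =
  poly_at (fun k => sum_f_R0 (fun j => w j * cs j k) J) N y.
Proof.
  unfold poly_at.
  rewrite (sum_eq _ (fun j => sum_f_R0 (fun k => w j * cs j k * y ^ k) N)).
  - rewrite sum_swap. apply sum_eq. intros k _. apply sum_mult_r.
  - intros j _. rewrite <- sum_mult_l. apply sum_eq. intros; ring.
Qed.

Lemma poly_pad (c : nat -> R) (m N : nat) (y : R) :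
  (forall k, (m < k)%nat -> c k = 0) -> (m <= N)%nat -> poly_at c N y = poly_at c m y.
Proof.
  intros Hc HN. induction N as [|N IH].
  - assert (m = 0%nat) by lia. subst. reflexivity.
  - destruct (Nat.eq_dec m (S N)) as [->|Hne]; [reflexivity|].
    unfold poly_at in *. rewrite tech5, IH by lia. rewrite Hc by lia. ring.
Qed.

Lemma poly_plus (c d : nat -> R) N y :
  poly_at c N y + poly_at d N y = poly_at (fun k => c k + d k) N y.
Proof. unfold poly_at. rewrite <- sum_plus. apply sum_eq. intros; ring. Qed.

Lemma poly_scal (c : nat -> R) a N y :
  a * poly_at c N y = poly_at (fun k => a * c k) N y.
Proof. unfold poly_at. rewrite <- sum_mult_l. apply sum_eq. intros; ring. Qed.

Definition shift (c : nat -> R) (k : nat) : R :=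
  match k with O => 0 | S k' => c k' end.

Lemma poly_shift (c : nat -> R) N y :
  y * poly_at c N y = poly_at (shift c) (S N) y.
Proof.
  unfold poly_at. rewrite (decomp_sum (fun k => shift c k * y ^ k)) by lia.
  simpl. rewrite <- sum_mult_l. ring_simplify. apply sum_eq. intros; simpl; ring.
Qed.

Definition hs (s : R) (n : nat) (y : R) : R :=
  sum_f_R0 (fun j => INR (fact n) / (INR (fact (n - 2 * j)) * INR (fact j))
                      * (-1) ^ j * s ^ j * y ^ (n - 2 * j)) (Nat.div2 n).

Definition hsc (s : R) (m k : nat) : R :=
  if Nat.leb k m then
    (if Nat.even (m - k) then
       INR (fact m) / (INR (fact k) * INR (fact (Nat.div2 (m - k))))
         * (-1) ^ (Nat.div2 (m - k)) * s ^ (Nat.div2 (m - k)) else 0)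
  else 0.

Lemma hs_poly (s : R) (m : nat) (y : R) : hs s m y = poly_at (hsc s m) m y.
Proof.
  unfold hs. rewrite sparse. unfold poly_at. apply sum_eq. intros k Hk.
  unfold sp_term, hsc. rewrite (proj2 (Nat.leb_le k m) Hk).
  destruct (Nat.even (m - k)) eqn:E; [|ring].
  pose proof (even_div2 _ E).
  replace (m - 2 * Nat.div2 (m - k))%nat with k by lia. ring.
Qed.

Lemma hsc_gt s m k : (m < k)%nat -> hsc s m k = 0.
Proof. intro H. unfold hsc. destruct (Nat.leb_spec k m); [lia|reflexivity]. Qed.

Lemma hs_pad s m N y : (m <= N)%nat -> hs s m y = poly_at (hsc s m) N y.
Proof. intro H. rewrite hs_poly. symmetry. apply poly_pad; auto. intros; apply hsc_gt; auto. Qed.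

Lemma hsc_diag s m : hsc s m m = 1.
Proof.
  unfold hsc. rewrite Nat.leb_refl, Nat.sub_diag. simpl.
  field. apply INR_fact_neq_0.
Qed.

Lemma hsc_sub1 s n : hsc s (S n) n = 0.
Proof.
  unfold hsc. destruct (Nat.leb_spec n (S n)); [|lia].
  replace (S n - n)%nat with 1%nat by lia. reflexivity.
Qed.

Lemma hsc_sub2 s n : hsc s (S (S n)) n = - (INR (S (S n)) * INR (S n)) * s.
Proof.
  unfold hsc. destruct (Nat.leb_spec n (S (S n))); [|lia].
  replace (S (S n) - n)%nat with 2%nat by lia. simpl Nat.even. simpl Nat.div2.
  change (fact (S (S n))) with (S (S n) * (S n * fact n))%nat.
  rewrite !mult_INR. simpl (fact 1). simpl INR at 4.
  change (INR 1) with 1. simpl pow. field. apply INR_fact_neq_0.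
Qed.

Lemma hcomb_poly s (a : nat -> R) n y :
  sum_f_R0 (fun j => a j * hs s (n - 2 * j) y) (Nat.div2 n) =
  poly_at (fun k => sum_f_R0 (fun j => a j * hsc s (n - 2 * j) k) (Nat.div2 n)) n y.
Proof.
  rewrite <- poly_lin. apply sum_eq. intros j _. rewrite (hs_pad s (n - 2 * j) n); auto. lia.
Qed.

Lemma hbasis_zero s M (D : nat -> R) :
  (forall y, sum_f_R0 (fun k => D k * hs s k y) M = 0) -> forall k, (k <= M)%nat -> D k = 0.
Proof.
  intro H.
  assert (HC : forall l, (l <= M)%nat -> sum_f_R0 (fun k => D k * hsc s k l) M = 0).
  { apply (poly_zero M (fun l => sum_f_R0 (fun k => D k * hsc s k l) M)).
    intro y. rewrite <- poly_lin. rewrite <- (H y). apply sum_eq. intros k Hk.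
    rewrite (hs_pad s k M); auto. }
  assert (T : forall t l, (l <= M)%nat -> (M - l <= t)%nat -> D l = 0).
  { induction t as [|t IH]; intros l Hl Ht.
    - specialize (HC l Hl). rewrite (sum_eq _ (fun k => if Nat.eqb k l then D l else 0)) in HC.
      + rewrite sum_delta in HC; auto.
      + intros k Hk. destruct (Nat.eqb_spec k l) as [->|Hne].
        * rewrite hsc_diag; ring.
        * rewrite hsc_gt by lia. ring.
    - specialize (HC l Hl). rewrite (sum_eq _ (fun k => if Nat.eqb k l then D l else 0)) in HC.
      + rewrite sum_delta in HC; auto.
      + intros k Hk. destruct (Nat.eqb_spec k l) as [->|Hne].
        * rewrite hsc_diag; ring.
        * destruct (Nat.lt_ge_cases k l).
          -- rewrite hsc_gt by lia. ring.
          -- rewrite (IH k) by lia. ring. }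
  intros k Hk. apply (T (M - k)%nat k); auto.
Qed.

Record quad := Quad { qA : R; qB : R; qAt : R; qBt : R }.

Definition SS (p q : R) := 2 * p * q + p + q.

Definition sU (a a' : nat -> nat -> R) (sel sel' : quad -> R) (K : nat -> nat -> quad)
  (n j' : nat) : R :=
  sum_f_R0 (fun i => a (n + 2 * S i)%nat (S i) * sel (K (n + 2 * S i)%nat (j' - i)%nat)
                   + a' (n + 2 * S i)%nat (S i) * sel' (K (n + 2 * S i)%nat (j' - i)%nat)) j'.

Definition K0 (p q Gam gam : R) : quad :=
  Quad (q / (Gam * SS p q)) (p / (gam * SS p q))
       ((q + 1) / (Gam * SS p q)) (- ((p + 1) / (gam * SS p q))).

Definition Kstep (p q Gam gam : R) (a b a' b' : nat -> nat -> R) (K : nat -> nat -> quad)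
  (n j' : nat) : quad :=
  let U := sU a a' qA qAt K n j' in
  let Uh := sU b b' qA qAt K n j' in
  let V := sU a a' qB qBt K n j' in
  let Vh := sU b b' qB qBt K n j' in
  Quad (- (q / (Gam * SS p q) * U + p / (gam * SS p q) * Uh))
       (- (q / (Gam * SS p q) * V + p / (gam * SS p q) * Vh))
       (- ((q + 1) / (Gam * SS p q) * U - (p + 1) / (gam * SS p q) * Uh))
       (- ((q + 1) / (Gam * SS p q) * V - (p + 1) / (gam * SS p q) * Vh)).

Fixpoint Kf (p q Gam gam : R) (a b a' b' : nat -> nat -> R) (fuel n j : nat) : quad :=
  match fuel with
  | O => Quad 0 0 0 0
  | S f => match j with
           | O => K0 p q Gam gam
           | S j' => Kstep p q Gam gam a b a' b' (Kf p q Gam gam a b a' b' f) n j'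
           end
  end.

Definition Kc p q Gam gam a b a' b' (n j : nat) : quad := Kf p q Gam gam a b a' b' (S j) n j.

Lemma sU_ext a a' sel sel' K K' n j' :
  (forall i, (i <= j')%nat -> K (n + 2 * S i)%nat (j' - i)%nat = K' (n + 2 * S i)%nat (j' - i)%nat) ->
  sU a a' sel sel' K n j' = sU a a' sel sel' K' n j'.
Proof. intro H. unfold sU. apply sum_eq. intros i Hi. rewrite H; auto. Qed.

Lemma Kf_stab p q Gam gam a b a' b' (j : nat) : forall f n, (j < f)%nat ->
  Kf p q Gam gam a b a' b' f n j = Kf p q Gam gam a b a' b' (S j) n j.
Proof.
  induction j as [j IH] using lt_wf_ind. intros f n Hf.
  destruct f as [|f]; [lia|]. destruct j as [|j']; [reflexivity|].
  simpl. unfold Kstep.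
  assert (E : forall sel sel' (a0 a0' : nat -> nat -> R),
     sU a0 a0' sel sel' (Kf p q Gam gam a b a' b' f) n j' =
     sU a0 a0' sel sel' (Kf p q Gam gam a b a' b' (S j')) n j').
  { intros. apply sU_ext. intros i Hi. rewrite (IH (j' - i)%nat) by lia.
    rewrite (IH (j' - i)%nat (ltac:(lia)) (S j')) by lia. reflexivity. }
  rewrite !E. reflexivity.
Qed.

Lemma Kc_S p q Gam gam a b a' b' n j' :
  Kc p q Gam gam a b a' b' n (S j') = Kstep p q Gam gam a b a' b' (Kc p q Gam gam a b a' b') n j'.
Proof.
  unfold Kc at 1. simpl. unfold Kstep.
  assert (E : forall sel sel' (a0 a0' : nat -> nat -> R),
     sU a0 a0' sel sel' (Kf p q Gam gam a b a' b' (S j')) n j' =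
     sU a0 a0' sel sel' (Kc p q Gam gam a b a' b') n j').
  { intros. apply sU_ext. intros i Hi. unfold Kc. apply Kf_stab. lia. }
  rewrite !E. reflexivity.
Qed.

Lemma Kc_0 p q Gam gam a b a' b' n : Kc p q Gam gam a b a' b' n 0 = K0 p q Gam gam.
Proof. reflexivity. Qed.

Lemma div2_le x : (2 * Nat.div2 x <= x)%nat.
Proof. pose proof (Nat.div2_odd x). destruct (Nat.odd x); simpl in *; lia. Qed.

Lemma div2_sub x i : (2 * i <= x)%nat -> Nat.div2 (x - 2 * i) = (Nat.div2 x - i)%nat.
Proof.
  intro H. rewrite !Nat.div2_div.
  assert (E : (x / 2 = (x - 2 * i) / 2 + i)%nat).
  { replace x with ((x - 2 * i) + i * 2)%nat at 1 by lia. rewrite Nat.div_add; lia. }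
  lia.
Qed.

Lemma rearr (a a' : nat -> nat -> R) (K : nat -> nat -> quad) (th tht Q Qh : nat -> R) (n J' : nat) :
  (forall i, (i <= J')%nat ->
     th (n + 2 * S i)%nat = sum_f_R0 (fun l => qA (K (n + 2 * S i)%nat l) * Q (n + 2 * S i + 2 * l)%nat
                                      + qB (K (n + 2 * S i)%nat l) * Qh (n + 2 * S i + 2 * l)%nat) (J' - i) /\
     tht (n + 2 * S i)%nat = sum_f_R0 (fun l => qAt (K (n + 2 * S i)%nat l) * Q (n + 2 * S i + 2 * l)%nat
                                      + qBt (K (n + 2 * S i)%nat l) * Qh (n + 2 * S i + 2 * l)%nat) (J' - i)) ->
  sum_f_R0 (fun i => a (n + 2 * S i)%nat (S i) * th (n + 2 * S i)%nat
                   + a' (n + 2 * S i)%nat (S i) * tht (n + 2 * S i)%nat) J' =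
  sum_f_R0 (fun j => sU a a' qA qAt K n j * Q (n + 2 * S j)%nat
                   + sU a a' qB qBt K n j * Qh (n + 2 * S j)%nat) J'.
Proof.
  intro IH.
  set (Y := fun i l => a (n + 2 * S i)%nat (S i) * (qA (K (n + 2 * S i)%nat l) * Q (n + 2 * S i + 2 * l)%nat
                                      + qB (K (n + 2 * S i)%nat l) * Qh (n + 2 * S i + 2 * l)%nat)
             + a' (n + 2 * S i)%nat (S i) * (qAt (K (n + 2 * S i)%nat l) * Q (n + 2 * S i + 2 * l)%nat
                                      + qBt (K (n + 2 * S i)%nat l) * Qh (n + 2 * S i + 2 * l)%nat)).
  rewrite (sum_eq _ (fun i => sum_f_R0 (fun l => Y i l) (J' - i))).
  2:{ intros i Hi. destruct (IH i Hi) as [H1 H2]. rewrite H1, H2.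
      rewrite <- !sum_mult_l, <- sum_plus. apply sum_eq. intros; unfold Y; ring. }
  rewrite tri_swap. apply sum_eq. intros j Hj.
  unfold sU. rewrite <- !sum_mult_r, <- sum_plus. apply sum_eq. intros i Hi.
  unfold Y. replace (n + 2 * S i + 2 * (j - i))%nat with (n + 2 * S j)%nat by lia. ring.
Qed.

Lemma invert p q Gam gam (a b a' b' : nat -> nat -> R) (M : nat) (Q Qh th tht : nat -> R) :
  Gam <> 0 -> gam <> 0 -> SS p q <> 0 ->
  (forall m, a m 0%nat = (p + 1) * Gam) -> (forall m, a' m 0%nat = p * Gam) ->
  (forall m, b m 0%nat = (q + 1) * gam) -> (forall m, b' m 0%nat = - (q * gam)) ->
  (forall k, (k <= M)%nat -> Q k = sum_f_R0 (fun i => a (k + 2 * i)%nat i * th (k + 2 * i)%nat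
                                 + a' (k + 2 * i)%nat i * tht (k + 2 * i)%nat) (Nat.div2 (M - k))) ->
  (forall k, (k <= M)%nat -> Qh k = sum_f_R0 (fun i => b (k + 2 * i)%nat i * th (k + 2 * i)%nat
                                 + b' (k + 2 * i)%nat i * tht (k + 2 * i)%nat) (Nat.div2 (M - k))) ->
  forall n, (n <= M)%nat ->
    th n = sum_f_R0 (fun j => qA (Kc p q Gam gam a b a' b' n j) * Q (n + 2 * j)%nat
                            + qB (Kc p q Gam gam a b a' b' n j) * Qh (n + 2 * j)%nat) (Nat.div2 (M - n)) /\
    tht n = sum_f_R0 (fun j => qAt (Kc p q Gam gam a b a' b' n j) * Q (n + 2 * j)%nat
                            + qBt (Kc p q Gam gam a b a' b' n j) * Qh (n + 2 * j)%nat) (Nat.div2 (M - n)).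
Proof.
  intros HG Hg HS Ha Ha' Hb Hb' HQ HQh.
  set (K := Kc p q Gam gam a b a' b').
  assert (Main : forall d n, (n <= M)%nat -> (M - n)%nat = d ->
    th n = sum_f_R0 (fun j => qA (K n j) * Q (n + 2 * j)%nat + qB (K n j) * Qh (n + 2 * j)%nat) (Nat.div2 (M - n)) /\
    tht n = sum_f_R0 (fun j => qAt (K n j) * Q (n + 2 * j)%nat + qBt (K n j) * Qh (n + 2 * j)%nat) (Nat.div2 (M - n))).
  2:{ intros n Hn. apply (Main (M - n)%nat n Hn eq_refl). }
  intro d. induction d as [d IH] using lt_wf_ind. intros n Hn Hd.
  pose proof (HQ n Hn) as HQn. pose proof (HQh n Hn) as HQhn.
  pose proof (div2_le (M - n)) as Hle.
  destruct (Nat.div2 (M - n)) as [|J'] eqn:EJ.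
  - simpl in HQn, HQhn |- *. rewrite !Nat.add_0_r in *.
    rewrite Ha, Ha' in HQn. rewrite Hb, Hb' in HQhn.
    unfold K, Kc, K0; simpl.
    rewrite HQn, HQhn. unfold SS in *. split; field; auto.
  - rewrite decomp_sum in HQn, HQhn by lia. simpl pred in HQn, HQhn.
    rewrite !Nat.add_0_r in HQn, HQhn. rewrite Ha, Ha' in HQn. rewrite Hb, Hb' in HQhn.
    assert (IHi : forall i, (i <= J')%nat ->
     th (n + 2 * S i)%nat = sum_f_R0 (fun l => qA (K (n + 2 * S i)%nat l) * Q (n + 2 * S i + 2 * l)%nat
                                      + qB (K (n + 2 * S i)%nat l) * Qh (n + 2 * S i + 2 * l)%nat) (J' - i) /\
     tht (n + 2 * S i)%nat = sum_f_R0 (fun l => qAt (K (n + 2 * S i)%nat l) * Q (n + 2 * S i + 2 * l)%nat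
                                      + qBt (K (n + 2 * S i)%nat l) * Qh (n + 2 * S i + 2 * l)%nat) (J' - i)).
    { intros i Hi.
      assert (E2 : Nat.div2 (M - (n + 2 * S i)) = (J' - i)%nat).
      { replace (M - (n + 2 * S i))%nat with ((M - n) - 2 * S i)%nat by lia.
        rewrite div2_sub by lia. rewrite EJ. lia. }
      rewrite <- E2. apply (IH (M - (n + 2 * S i))%nat); lia. }
    rewrite (rearr a a' K th tht Q Qh n J' IHi) in HQn.
    rewrite (rearr b b' K th tht Q Qh n J' IHi) in HQhn.
    rewrite !(decomp_sum (fun j => _ * Q (n + 2 * j)%nat + _)) by lia. simpl pred.
    rewrite !Nat.add_0_r.
    unfold K at 1 2 5 6. rewrite !Kc_0.
    set (P := sum_f_R0 (fun j => sU a a' qA qAt K n j * Q (n + 2 * S j)%nat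
                   + sU a a' qB qBt K n j * Qh (n + 2 * S j)%nat) J') in HQn.
    set (Ph := sum_f_R0 (fun j => sU b b' qA qAt K n j * Q (n + 2 * S j)%nat
                   + sU b b' qB qBt K n j * Qh (n + 2 * S j)%nat) J') in HQhn.
    assert (E1 : sum_f_R0 (fun i => qA (K n (S i)) * Q (n + 2 * S i)%nat + qB (K n (S i)) * Qh (n + 2 * S i)%nat) J'
             = - (q / (Gam * SS p q)) * P + - (p / (gam * SS p q)) * Ph).
    { unfold P, Ph. rewrite <- !sum_mult_l, <- sum_plus. apply sum_eq. intros i _.
      unfold K. rewrite Kc_S. unfold Kstep. simpl. fold K. ring. }
    assert (E3 : sum_f_R0 (fun i => qAt (K n (S i)) * Q (n + 2 * S i)%nat + qBt (K n (S i)) * Qh (n + 2 * S i)%nat) J'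
             = - ((q + 1) / (Gam * SS p q)) * P + ((p + 1) / (gam * SS p q)) * Ph).
    { unfold P, Ph. rewrite <- !sum_mult_l, <- sum_plus. apply sum_eq. intros i _.
      unfold K. rewrite Kc_S. unfold Kstep. simpl. fold K. ring. }
    rewrite E1, E3. unfold K0. simpl qA; simpl qB; simpl qAt; simpl qBt.
    rewrite HQn, HQhn. unfold SS in *. split; field; auto.
Qed.

Lemma poly_eq c d N : (forall y, poly_at c N y = poly_at d N y) -> forall k, (k <= N)%nat -> c k = d k.
Proof.
  intros H k Hk.
  assert (Z : forall y, poly_at (fun k => c k + (-1) * d k) N y = 0).
  { intro y. rewrite <- poly_plus, <- poly_scal, H. ring. }
  pose proof (poly_zero N _ Z k Hk). simpl in H0. lra.
Qed.

Lemma poly_trunc c N N' y : (N <= N')%nat ->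
  poly_at c N y = poly_at (fun k => if Nat.leb k N then c k else 0) N' y.
Proof.
  intro H. rewrite (poly_pad _ N N'); auto.
  - unfold poly_at. apply sum_eq. intros i Hi. rewrite (proj2 (Nat.leb_le i N) Hi). reflexivity.
  - intros k Hk. destruct (Nat.leb_spec k N); [lia|reflexivity].
Qed.

Lemma coef_top s (a : nat -> R) n :
  sum_f_R0 (fun j => a j * hsc s (n - 2 * j) n) (Nat.div2 n) = a 0%nat.
Proof.
  rewrite (sum_eq _ (fun j => if Nat.eqb j 0 then a 0%nat else 0)).
  - apply sum_delta. apply Nat.le_0_l.
  - intros j Hj. pose proof (div2_le n). destruct (Nat.eqb_spec j 0) as [->|Hne].
    + rewrite Nat.sub_0_r, hsc_diag. ring.
    + rewrite hsc_gt by lia. ring.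
Qed.

Lemma coef_sub2 s (a : nat -> R) n :
  sum_f_R0 (fun j => a j * hsc s (S (S n) - 2 * j) n) (Nat.div2 (S (S n))) =
  a 0%nat * (- (INR (S (S n)) * INR (S n)) * s) + a 1%nat.
Proof.
  rewrite (sum_eq _ (fun j => (if Nat.eqb j 0 then a 0%nat * (- (INR (S (S n)) * INR (S n)) * s) else 0)
                              + (if Nat.eqb j 1 then a 1%nat else 0))).
  - rewrite sum_plus, !sum_delta; [reflexivity| |]; change (Nat.div2 (S (S n))) with (S (Nat.div2 n)); set (x := Nat.div2 n); lia.
  - intros j Hj. pose proof (div2_le (S (S n))).
    destruct (Nat.eqb_spec j 0) as [->|H0]; [|destruct (Nat.eqb_spec j 1) as [->|H1]].
    + rewrite Nat.sub_0_r, hsc_sub2. simpl. ring.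
    + replace (S (S n) - 2 * 1)%nat with n by lia. rewrite hsc_diag. simpl. ring.
    + rewrite hsc_gt by lia. ring.
Qed.

Lemma lead_coef s (F : R -> R) (a : nat -> R) n L :
  (forall y, F y = sum_f_R0 (fun j => a j * hs s (n - 2 * j) y) (Nat.div2 n)) ->
  (exists c : nat -> R, c n = L /\ forall y, F y = sum_f_R0 (fun k => c k * y ^ k) n) ->
  a 0%nat = L.
Proof.
  intros HF [c [Hc HcF]].
  assert (E := poly_eq (fun k => sum_f_R0 (fun j => a j * hsc s (n - 2 * j) k) (Nat.div2 n)) c n).
  rewrite <- (coef_top s a n), <- Hc. apply E; auto.
  intro y. rewrite <- hcomb_poly, <- HF, HcF. reflexivity.
Qed.

Lemma level_eq s (a a' : nat -> nat -> R) (F F' : nat -> R -> R) M (Q th tht : nat -> R) :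
  (forall n y, F n y = sum_f_R0 (fun j => a n j * hs s (n - 2 * j) y) (Nat.div2 n)) ->
  (forall n y, F' n y = sum_f_R0 (fun j => a' n j * hs s (n - 2 * j) y) (Nat.div2 n)) ->
  (forall y, sum_f_R0 (fun k => Q k * hs s k y) M = sum_f_R0 (fun n => th n * F n y + tht n * F' n y) M) ->
  forall k, (k <= M)%nat -> Q k = sum_f_R0 (fun i => a (k + 2 * i)%nat i * th (k + 2 * i)%nat
                                 + a' (k + 2 * i)%nat i * tht (k + 2 * i)%nat) (Nat.div2 (M - k)).
Proof.
  intros HF HF' H.
  set (R0 := fun k => sum_f_R0 (fun i => a (k + 2 * i)%nat i * th (k + 2 * i)%nat
                                 + a' (k + 2 * i)%nat i * tht (k + 2 * i)%nat) (Nat.div2 (M - k))).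
  assert (Z : forall y, sum_f_R0 (fun k => (Q k + (-1) * R0 k) * hs s k y) M = 0).
  { intro y.
    assert (E : sum_f_R0 (fun n => th n * F n y + tht n * F' n y) M =
                sum_f_R0 (fun k => R0 k * hs s k y) M).
    { rewrite (sum_eq _ (fun n => sum_f_R0 (fun j => (a n j * th n + a' n j * tht n) * hs s (n - 2 * j) y) (Nat.div2 n))).
      - rewrite regroup. apply sum_eq. intros k Hk. unfold R0. rewrite <- sum_mult_r.
        apply sum_eq. intros i Hi. replace (k + 2 * i - 2 * i)%nat with k by lia. ring.
      - intros n Hn. rewrite HF, HF', <- !sum_mult_l, <- sum_plus. apply sum_eq. intros; ring. }
    rewrite (sum_eq _ (fun k => Q k * hs s k y + (-1) * (R0 k * hs s k y))) by (intros; ring).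
    rewrite sum_plus, (sum_mult_l (fun l => R0 l * hs s l y)), <- E, <- H. ring. }
  intros k Hk. pose proof (hbasis_zero s M _ Z k Hk). fold (R0 k). lra.
Qed.

Lemma deriv_poly_eq (F F1 : R -> R) c N :
  (forall y, F y = poly_at c (S N) y) -> is_deriv F F1 -> forall y, F1 y = poly_at (dc c) N y.
Proof.
  intros HF Hd y. apply (uniqueness_limite F y). apply Hd.
  replace F with (fun z => poly_at c (S N) z) by (apply functional_extensionality; intro; auto).
  apply poly_deriv.
Qed.

Lemma shift_dc c n : shift (dc c) n = INR n * c n.
Proof. destruct n; simpl; [ring|]. unfold dc. reflexivity. Qed.

Lemma poly_combo5 T Sh C D E r1 r2 r3 r4 r5 N y :
  poly_at (fun k => r1 * T k + r2 * Sh k + r3 * C k + r4 * D k + r5 * E k) N y =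
  r1 * poly_at T N y + r2 * poly_at Sh N y + r3 * poly_at C N y + r4 * poly_at D N y + r5 * poly_at E N y.
Proof.
  unfold poly_at. rewrite <- !sum_mult_l, <- !sum_plus. apply sum_eq. intros; ring.
Qed.

Lemma eigen_coef p q mu Gam gam lam (F G : R -> R) (a b : nat -> R) n :
  (forall y, F y = sum_f_R0 (fun j => a j * hs 1 (S (S n) - 2 * j) y) (Nat.div2 (S (S n)))) ->
  (forall y, G y = sum_f_R0 (fun j => b j * hs mu (S (S n) - 2 * j) y) (Nat.div2 (S (S n)))) ->
  eigenpair p q mu Gam gam lam F G ->
  let X := a 0%nat * (- (INR (S (S n)) * INR (S n)) * 1) + a 1%nat in
  let Z := b 0%nat * (- (INR (S (S n)) * INR (S n)) * mu) + b 1%nat in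
  1 * (INR (S n) * (INR (S (S n)) * a 0%nat)) + (-/2) * (INR n * X) + (- ((p + 1) / (p * q - 1))) * X
    + (p * Rpower gam (p - 1)) * Z + (- lam) * X = 0 /\
  mu * (INR (S n) * (INR (S (S n)) * b 0%nat)) + (-/2) * (INR n * Z) + (q * Rpower Gam (q - 1)) * X
    + (- ((q + 1) / (p * q - 1))) * Z + (- lam) * Z = 0.
Proof.
  intros HF HG [f1 [f2 [g1 [g2 [D1 [D2 [D3 [D4 Heq]]]]]]]] X Z.
  set (fc := fun k => sum_f_R0 (fun j => a j * hsc 1 (S (S n) - 2 * j) k) (Nat.div2 (S (S n)))).
  set (gc := fun k => sum_f_R0 (fun j => b j * hsc mu (S (S n) - 2 * j) k) (Nat.div2 (S (S n)))).
  assert (PF : forall y, F y = poly_at fc (S (S n)) y) by (intro; rewrite HF; apply hcomb_poly).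
  assert (PG : forall y, G y = poly_at gc (S (S n)) y) by (intro; rewrite HG; apply hcomb_poly).
  pose proof (deriv_poly_eq _ _ _ _ PF D1) as P1.
  pose proof (deriv_poly_eq _ _ _ _ P1 D2) as P2.
  pose proof (deriv_poly_eq _ _ _ _ PG D3) as Q1.
  pose proof (deriv_poly_eq _ _ _ _ Q1 D4) as Q2.
  assert (Efc2 : fc (S (S n)) = a 0%nat) by (apply coef_top).
  assert (Egc2 : gc (S (S n)) = b 0%nat) by (apply coef_top).
  assert (Efc : fc n = X) by (apply coef_sub2).
  assert (Egc : gc n = Z) by (apply coef_sub2).
  split.
  - set (T := fun k => if Nat.leb k n then dc (dc fc) k else 0).
    assert (H0 : forall y, poly_at (fun k => 1 * T k + (-/2) * shift (dc fc) k + (- ((p + 1) / (p * q - 1))) * fc k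
                     + (p * Rpower gam (p - 1)) * gc k + (- lam) * fc k) (S (S n)) y = 0).
    { intro y. rewrite poly_combo5. unfold T. rewrite <- poly_trunc by lia. rewrite <- poly_shift.
      rewrite <- P2, <- P1, <- PF, <- PG. destruct (Heq y) as [E1 _]. lra. }
    pose proof (poly_zero _ _ H0 n ltac:(lia)) as H. simpl in H.
    unfold T in H. rewrite Nat.leb_refl, shift_dc in H. unfold dc at 1 2 in H.
    rewrite Efc2, Efc, Egc in H. exact H.
  - set (T := fun k => if Nat.leb k n then dc (dc gc) k else 0).
    assert (H0 : forall y, poly_at (fun k => mu * T k + (-/2) * shift (dc gc) k + (q * Rpower Gam (q - 1)) * fc k
                     + (- ((q + 1) / (p * q - 1))) * gc k + (- lam) * gc k) (S (S n)) y = 0).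
    { intro y. rewrite poly_combo5. unfold T. rewrite <- poly_trunc by lia. rewrite <- poly_shift.
      rewrite <- Q2, <- Q1, <- PF, <- PG. destruct (Heq y) as [_ E2]. lra. }
    pose proof (poly_zero _ _ H0 n ltac:(lia)) as H. simpl in H.
    unfold T in H. rewrite Nat.leb_refl, shift_dc in H. unfold dc at 1 2 in H.
    rewrite Egc2, Efc, Egc in H. exact H.
Qed.

Lemma h_hs n y : h n y = hs 1 n y.
Proof. unfold h, hs. rewrite Nat.div2_div. apply sum_eq. intros. rewrite pow1. ring. Qed.

Lemma hh_hs mu n y : hh mu n y = hs mu n y.
Proof. unfold hh, hs. rewrite Nat.div2_div. reflexivity. Qed.

Lemma solve2 c11 c12 c21 c22 r1 r2 x z :
  c11 * c22 - c12 * c21 <> 0 -> r1 + c11 * x + c12 * z = 0 -> r2 + c21 * x + c22 * z = 0 ->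
  x = (c12 * r2 - c22 * r1) / (c11 * c22 - c12 * c21) /\
  z = (c21 * r1 - c11 * r2) / (c11 * c22 - c12 * c21).
Proof.
  intros Hd E1 E2. split.
  - apply (Rmult_eq_reg_l (c11 * c22 - c12 * c21)); [|exact Hd].
    assert (H : (c11 * c22 - c12 * c21) * x = c12 * r2 - c22 * r1).
    { replace ((c11 * c22 - c12 * c21) * x) with (c22 * (r1 + c11 * x + c12 * z) - c12 * (r2 + c21 * x + c22 * z) + (c12 * r2 - c22 * r1)) by ring.
      rewrite E1, E2. ring. }
    rewrite H. field. exact Hd.
  - apply (Rmult_eq_reg_l (c11 * c22 - c12 * c21)); [|exact Hd].
    assert (H : (c11 * c22 - c12 * c21) * z = c21 * r1 - c11 * r2).
    { replace ((c11 * c22 - c12 * c21) * z) with (c11 * (r2 + c21 * x + c22 * z) - c21 * (r1 + c11 * x + c12 * z) + (c21 * r1 - c11 * r2)) by ring.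
      rewrite E1, E2. ring. }
    rewrite H. field. exact Hd.
Qed.

Lemma F2f p q mu Gam gam (a0 b0 a1 b1 : R) n :
  1 < p -> 1 < q -> 0 < Gam -> 0 < gam ->
  a0 = (p + 1) * Gam -> b0 = (q + 1) * gam ->
  let R1 := Gam * ((p + 1) / (p * q - 1)) / gam in
  let R2 := gam * ((q + 1) / (p * q - 1)) / Gam in
  let lam := 1 - (INR n + 2) / 2 in
  let X := a0 * (- ((INR n + 2) * (INR n + 1)) * 1) + a1 in
  let Z := b0 * (- ((INR n + 2) * (INR n + 1)) * mu) + b1 in
  1 * ((INR n + 1) * ((INR n + 2) * a0)) + (-/2) * (INR n * X) + (- ((p + 1) / (p * q - 1))) * X
    + (p * R1) * Z + (- lam) * X = 0 ->
  mu * ((INR n + 1) * ((INR n + 2) * b0)) + (-/2) * (INR n * Z) + (q * R2) * X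
    + (- ((q + 1) / (p * q - 1))) * Z + (- lam) * Z = 0 ->
  a1 = (INR n + 2) * (INR n + 1) * (1 - mu) * p * Gam /\
  b1 = - ((INR n + 2) * (INR n + 1) * (1 - mu) * q * gam).
Proof.
  intros Hp Hq HG Hg Ha0 Hb0 R1 R2 lam X Z E1 E2.
  assert (Hpq : p * q - 1 <> 0) by nra.
  assert (E1' : 1 * ((INR n + 1) * ((INR n + 2) * a0)) + ((-/2) * INR n + (- ((p + 1) / (p * q - 1))) - lam) * X + (p * R1) * Z = 0)
    by (rewrite <- E1; ring).
  assert (E2' : mu * ((INR n + 1) * ((INR n + 2) * b0)) + (q * R2) * X + ((-/2) * INR n + (- ((q + 1) / (p * q - 1))) - lam) * Z = 0)
    by (rewrite <- E2; ring).
  assert (Hdet : ((-/2) * INR n + (- ((p + 1) / (p * q - 1))) - lam) * ((-/2) * INR n + (- ((q + 1) / (p * q - 1))) - lam)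
                 - (p * R1) * (q * R2) = - ((p + 1) * (q + 1) / (p * q - 1))).
  { unfold R1, R2, lam. field. repeat split; lra. }
  assert (Hdn : - ((p + 1) * (q + 1) / (p * q - 1)) <> 0).
  { apply Ropp_neq_0_compat. unfold Rdiv. apply Rmult_integral_contrapositive_currified.
    nra. apply Rinv_neq_0_compat; exact Hpq. }
  rewrite <- Hdet in Hdn.
  destruct (solve2 _ _ _ _ _ _ X Z Hdn E1' E2') as [HX HZ].
  rewrite Hdet in HX, HZ.
  unfold X in HX. unfold Z in HZ. split.
  - apply (Rplus_eq_reg_l (a0 * (- ((INR n + 2) * (INR n + 1)) * 1))). rewrite HX.
    unfold R1, R2, lam. rewrite Ha0, Hb0. field. repeat split; lra.
  - apply (Rplus_eq_reg_l (b0 * (- ((INR n + 2) * (INR n + 1)) * mu))). rewrite HZ.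
    unfold R1, R2, lam. rewrite Ha0, Hb0. field. repeat split; try lra.
Qed.

Lemma F2t p q mu Gam gam (a0 b0 a1 b1 : R) n :
  1 < p -> 1 < q -> 0 < Gam -> 0 < gam ->
  a0 = p * Gam -> b0 = - (q * gam) ->
  let R1 := Gam * ((p + 1) / (p * q - 1)) / gam in
  let R2 := gam * ((q + 1) / (p * q - 1)) / Gam in
  let lam := - ((INR n + 2) / 2 + (p + 1) * (q + 1) / (p * q - 1)) in
  let X := a0 * (- ((INR n + 2) * (INR n + 1)) * 1) + a1 in
  let Z := b0 * (- ((INR n + 2) * (INR n + 1)) * mu) + b1 in
  1 * ((INR n + 1) * ((INR n + 2) * a0)) + (-/2) * (INR n * X) + (- ((p + 1) / (p * q - 1))) * X
    + (p * R1) * Z + (- lam) * X = 0 ->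
  mu * ((INR n + 1) * ((INR n + 2) * b0)) + (-/2) * (INR n * Z) + (q * R2) * X
    + (- ((q + 1) / (p * q - 1))) * Z + (- lam) * Z = 0 ->
  a1 = (INR n + 2) * (INR n + 1) * (1 - mu) * p * q / (3 * p * q + p + q - 1) * (p + 1) * Gam /\
  b1 = (INR n + 2) * (INR n + 1) * (1 - mu) * p * q / (3 * p * q + p + q - 1) * (q + 1) * gam.
Proof.
  intros Hp Hq HG Hg Ha0 Hb0 R1 R2 lam X Z E1 E2.
  assert (Hpq : p * q - 1 <> 0) by nra.
  assert (H3 : 3 * p * q + p + q - 1 <> 0) by nra.
  assert (E1' : 1 * ((INR n + 1) * ((INR n + 2) * a0)) + ((-/2) * INR n + (- ((p + 1) / (p * q - 1))) - lam) * X + (p * R1) * Z = 0)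
    by (rewrite <- E1; ring).
  assert (E2' : mu * ((INR n + 1) * ((INR n + 2) * b0)) + (q * R2) * X + ((-/2) * INR n + (- ((q + 1) / (p * q - 1))) - lam) * Z = 0)
    by (rewrite <- E2; ring).
  assert (Hdet : ((-/2) * INR n + (- ((p + 1) / (p * q - 1))) - lam) * ((-/2) * INR n + (- ((q + 1) / (p * q - 1))) - lam)
                 - (p * R1) * (q * R2) = (3 * p * q + p + q - 1) / (p * q - 1)).
  { unfold R1, R2, lam. field. repeat split; lra. }
  assert (Hdn : (3 * p * q + p + q - 1) / (p * q - 1) <> 0).
  { unfold Rdiv. apply Rmult_integral_contrapositive_currified. exact H3.
    apply Rinv_neq_0_compat; exact Hpq. }
  rewrite <- Hdet in Hdn.
  destruct (solve2 _ _ _ _ _ _ X Z Hdn E1' E2') as [HX HZ].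
  rewrite Hdet in HX, HZ.
  unfold X in HX. unfold Z in HZ. split.
  - apply (Rplus_eq_reg_l (a0 * (- ((INR n + 2) * (INR n + 1)) * 1))). rewrite HX.
    unfold R1, R2, lam. rewrite Ha0, Hb0. field. repeat split; lra.
  - apply (Rplus_eq_reg_l (b0 * (- ((INR n + 2) * (INR n + 1)) * mu))). rewrite HZ.
    unfold R1, R2, lam. rewrite Ha0, Hb0. field. repeat split; try lra.
Qed.

Theorem mainTheorem4 (p q mu Gam gam : R) (f g ft gt : nat -> R -> R) :
  1 < p -> 1 < q -> 0 < mu -> 0 < Gam -> 0 < gam ->
  Rpower gam p = Gam * ((p + 1) / (p * q - 1)) ->
  Rpower Gam q = gam * ((q + 1) / (p * q - 1)) ->
  (forall n : nat,
     eigenpair p q mu Gam gam (1 - INR n / 2) (f n) (g n) /\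
     poly_deg_lead (f n) n ((p + 1) * Gam) /\
     poly_deg_lead (g n) n ((q + 1) * gam) /\
     hcomb mu n (f n) (g n)) ->
  (forall n : nat,
     eigenpair p q mu Gam gam
       (- (INR n / 2 + (p + 1) * (q + 1) / (p * q - 1))) (ft n) (gt n) /\
     poly_deg_lead (ft n) n (p * Gam) /\
     poly_deg_lead (gt n) n (- (q * gam)) /\
     hcomb mu n (ft n) (gt n)) ->
  exists A B At Bt : nat -> nat -> R,
    (forall (M : nat) (Q Qh th tht : nat -> R),
       (forall y,
          sum_f_R0 (fun k => Q k * h k y) M
            = sum_f_R0 (fun n => th n * f n y + tht n * ft n y) M /\
          sum_f_R0 (fun k => Qh k * hh mu k y) M
            = sum_f_R0 (fun n => th n * g n y + tht n * gt n y) M) ->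
       forall n : nat, (n <= M)%nat ->
         th n = sum_f_R0 (fun j => A (n + 2 * j)%nat n * Q (n + 2 * j)%nat
                                  + B (n + 2 * j)%nat n * Qh (n + 2 * j)%nat)
                         ((M - n) / 2) /\
         tht n = sum_f_R0 (fun j => At (n + 2 * j)%nat n * Q (n + 2 * j)%nat
                                   + Bt (n + 2 * j)%nat n * Qh (n + 2 * j)%nat)
                          ((M - n) / 2)) /\
    (forall n : nat,
       A n n = q / (Gam * (2 * p * q + p + q)) /\
       B n n = p / (gam * (2 * p * q + p + q)) /\
       A (n + 2)%nat n = - (etilde p q mu gam n / (Gam * gam * (2 * p * q + p + q))) /\
       B (n + 2)%nat n = (p + 1) / (q + 1)
                         * (etilde p q mu gam n / (gam ^ 2 * (2 * p * q + p + q)))).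
Proof.
  intros Hp Hq Hmu HG Hg Hgp HGq Hf Hft.
  assert (Hpq : p * q - 1 <> 0) by nra.
  assert (HR1 : Rpower gam (p - 1) = Gam * ((p + 1) / (p * q - 1)) / gam).
  { assert (E : Rpower gam ((p - 1) + 1) = Rpower gam (p - 1) * gam)
      by (rewrite Rpower_plus, Rpower_1; auto).
    replace ((p - 1) + 1) with p in E by ring. rewrite <- Hgp, E. field. lra. }
  assert (HR2 : Rpower Gam (q - 1) = gam * ((q + 1) / (p * q - 1)) / Gam).
  { assert (E : Rpower Gam ((q - 1) + 1) = Rpower Gam (q - 1) * Gam)
      by (rewrite Rpower_plus, Rpower_1; auto).
    replace ((q - 1) + 1) with q in E by ring. rewrite <- HGq, E. field. lra. }
  assert (Cf : forall n, exists ab : (nat -> R) * (nat -> R), forall y,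
     f n y = sum_f_R0 (fun j => fst ab j * hs 1 (n - 2 * j) y) (Nat.div2 n) /\
     g n y = sum_f_R0 (fun j => snd ab j * hs mu (n - 2 * j) y) (Nat.div2 n)).
  { intro n. destruct (Hf n) as [_ [_ [_ [a [b Hab]]]]]. exists (a, b). intro y.
    destruct (Hab y) as [E1 E2]. rewrite E1, E2, Nat.div2_div. simpl. split.
    - apply sum_eq. intros. rewrite h_hs. reflexivity.
    - apply sum_eq. intros. rewrite hh_hs. reflexivity. }
  assert (Cft : forall n, exists ab : (nat -> R) * (nat -> R), forall y,
     ft n y = sum_f_R0 (fun j => fst ab j * hs 1 (n - 2 * j) y) (Nat.div2 n) /\
     gt n y = sum_f_R0 (fun j => snd ab j * hs mu (n - 2 * j) y) (Nat.div2 n)).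
  { intro n. destruct (Hft n) as [_ [_ [_ [a [b Hab]]]]]. exists (a, b). intro y.
    destruct (Hab y) as [E1 E2]. rewrite E1, E2, Nat.div2_div. simpl. split.
    - apply sum_eq. intros. rewrite h_hs. reflexivity.
    - apply sum_eq. intros. rewrite hh_hs. reflexivity. }
  destruct (functional_choice _ Cf) as [AB HAB].
  destruct (functional_choice _ Cft) as [ABt HABt].
  set (a := fun n j => fst (AB n) j). set (b := fun n j => snd (AB n) j).
  set (a' := fun n j => fst (ABt n) j). set (b' := fun n j => snd (ABt n) j).
  assert (HFa : forall n y, f n y = sum_f_R0 (fun j => a n j * hs 1 (n - 2 * j) y) (Nat.div2 n))
    by (intros; apply HAB).
  assert (HFb : forall n y, g n y = sum_f_R0 (fun j => b n j * hs mu (n - 2 * j) y) (Nat.div2 n))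
    by (intros; apply HAB).
  assert (HFa' : forall n y, ft n y = sum_f_R0 (fun j => a' n j * hs 1 (n - 2 * j) y) (Nat.div2 n))
    by (intros; apply HABt).
  assert (HFb' : forall n y, gt n y = sum_f_R0 (fun j => b' n j * hs mu (n - 2 * j) y) (Nat.div2 n))
    by (intros; apply HABt).
  clearbody a b a' b'.
  assert (La : forall m, a m 0%nat = (p + 1) * Gam).
  { intro m. apply (lead_coef 1 (f m) (a m) m); [apply HFa|apply (Hf m)]. }
  assert (Lb : forall m, b m 0%nat = (q + 1) * gam).
  { intro m. apply (lead_coef mu (g m) (b m) m); [apply HFb|apply (Hf m)]. }
  assert (La' : forall m, a' m 0%nat = p * Gam).
  { intro m. apply (lead_coef 1 (ft m) (a' m) m); [apply HFa'|apply (Hft m)]. }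
  assert (Lb' : forall m, b' m 0%nat = - (q * gam)).
  { intro m. apply (lead_coef mu (gt m) (b' m) m); [apply HFb'|apply (Hft m)]. }
  assert (Sf : forall n, a (S (S n)) 1%nat = (INR n + 2) * (INR n + 1) * (1 - mu) * p * Gam /\
                         b (S (S n)) 1%nat = - ((INR n + 2) * (INR n + 1) * (1 - mu) * q * gam)).
  { intro n. destruct (Hf (S (S n))) as [Hei _].
    pose proof (eigen_coef p q mu Gam gam _ (f (S (S n))) (g (S (S n))) (a (S (S n))) (b (S (S n))) n
                  (HFa (S (S n))) (HFb (S (S n))) Hei) as [C1 C2].
    rewrite HR1, !S_INR in C1. rewrite HR2, !S_INR in C2.
    apply (F2f p q mu Gam gam (a (S (S n)) 0%nat) (b (S (S n)) 0%nat)); auto.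
    - rewrite <- C1. replace (INR n + 1 + 1) with (INR n + 2) by ring. reflexivity.
    - rewrite <- C2. replace (INR n + 1 + 1) with (INR n + 2) by ring. reflexivity. }
  assert (St : forall n, a' (S (S n)) 1%nat = (INR n + 2) * (INR n + 1) * (1 - mu) * p * q / (3 * p * q + p + q - 1) * (p + 1) * Gam /\
                         b' (S (S n)) 1%nat = (INR n + 2) * (INR n + 1) * (1 - mu) * p * q / (3 * p * q + p + q - 1) * (q + 1) * gam).
  { intro n. destruct (Hft (S (S n))) as [Hei _].
    pose proof (eigen_coef p q mu Gam gam _ (ft (S (S n))) (gt (S (S n))) (a' (S (S n))) (b' (S (S n))) n
                  (HFa' (S (S n))) (HFb' (S (S n))) Hei) as [C1 C2].
    rewrite HR1, !S_INR in C1. rewrite HR2, !S_INR in C2.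
    apply (F2t p q mu Gam gam (a' (S (S n)) 0%nat) (b' (S (S n)) 0%nat)); auto.
    - rewrite <- C1. replace (INR n + 1 + 1) with (INR n + 2) by ring. reflexivity.
    - rewrite <- C2. replace (INR n + 1 + 1) with (INR n + 2) by ring. reflexivity. }
  set (K := Kc p q Gam gam a b a' b').
  exists (fun m n => qA (K n (Nat.div2 (m - n)))), (fun m n => qB (K n (Nat.div2 (m - n)))),
         (fun m n => qAt (K n (Nat.div2 (m - n)))), (fun m n => qBt (K n (Nat.div2 (m - n)))).
  split.
  - intros M Q Qh th tht Hid n Hn.
    assert (HQ := level_eq 1 a a' f ft M Q th tht HFa HFa').
    assert (HQh := level_eq mu b b' g gt M Qh th tht HFb HFb').
    assert (I := invert p q Gam gam a b a' b' M Q Qh th tht ltac:(lra) ltac:(lra) ltac:(unfold SS; nra)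
                   La La' Lb Lb').
    rewrite <- Nat.div2_div.
    assert (E : forall j, Nat.div2 (n + 2 * j - n) = j).
    { intro j. replace (n + 2 * j - n)%nat with (2 * j)%nat by lia. apply Nat.div2_double. }
    destruct (I ltac:(intros k Hk; apply HQ; auto; intro y; rewrite <- (proj1 (Hid y));
                      apply sum_eq; intros; rewrite h_hs; reflexivity)
                ltac:(intros k Hk; apply HQh; auto; intro y; rewrite <- (proj2 (Hid y));
                      apply sum_eq; intros; rewrite hh_hs; reflexivity) n Hn) as [T1 T2].
    split; [rewrite T1|rewrite T2]; apply sum_eq; intros j _; rewrite E; reflexivity.
  - intro n. rewrite Nat.sub_diag. replace (n + 2 - n)%nat with 2%nat by lia.
    simpl Nat.div2. unfold K. rewrite Kc_S, Kc_0. unfold Kstep, sU. simpl sum_f_R0.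
    unfold K0, SS. simpl qA; simpl qB; simpl qAt; simpl qBt.
    replace (n + 2)%nat with (S (S n)) by lia.
    destruct (Sf n) as [Sa Sb]. destruct (St n) as [Sa' Sb'].
    rewrite Sa, Sb, Sa', Sb'. unfold etilde.
    assert (H3 : 3 * p * q + p + q - 1 <> 0) by nra.
    repeat split; field; repeat split; nra.
Qed.
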